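(* For every $n\geq 2$, the pair $(H_n,v)$ is neutral for the glue operator, where $H_n$ is the hanging split graph of size $n$ and $v$ is its distinguished clique vertex.
   Context: For $n\geq 2$, the hanging split graph $H_n$ consists of a clique on vertices $\{v,v_1,\ldots,v_{n-1}\}$, an independent set $\{u_1,\ldots,u_{n-1}\}$, and edges $u_iv_i$ for $1\le i\le n-1$ (so $H_2$ is the path on three vertices with $v$ an endpoint). The Maker-Breaker domination game on a graph: Dominator and Staller alternately choose a not-yet-chosen vertex (no passing), starting with all vertices unchosen; when all vertices are chosen, Dominator wins if his vertices form a dominating set of the graph, otherwise Staller wins. The outcome $o(\cdot)$ is $\mathcal D$ if Dominator has a winning strategy both as first and as second player, $\mathcal S$ if Staller has a winning strategy both as first and as second player, and $\mathcal N$ if the first player has a winning strategy. For disjoint graphs $G,H$ and vertices $u\in V(G)$, $v\in V(H)$, the glued graph $G\odot_{u,v}H$ is obtained from the disjoint union by identifying $u$ and $v$ into one new vertex $w$, adjacent to all former neighbors of $u$ in $G$ and of $v$ in $H$. The pair $(H,v)$ is neutral for the glue operator if for every graph $G$ and every vertex $u$ of $G$, $o(G\odot_{u,v}H)=o(G)$. *)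

(* Defs.v *)
From mathcomp Require Import all_boot.
Set Implicit Arguments. Unset Strict Implicit. Unset Printing Implicit Defensive.

(* A finite simple graph is a finType T with a symmetric irreflexive
   adjacency relation e : rel T. *)

Section Game.
Variables (T : finType) (e : rel T).

Definition dominating (D : {set T}) : bool :=
  [forall x, (x \in D) || [exists y in D, e x y]].

(* Position: D (Dominator's vertices),
   S (Staller's vertices); dom_turn = true iff Dominator moves next.
   The fuel k is the number of unchosen vertices.  No passing; when all
   vertices are chosen Dominator wins iff D is dominating. *)
Fixpoint dom_wins (k : nat) (D S : {set T}) (dom_turn : bool) : bool :=
  if k is k'.+1 then
    if dom_turn then [exists x in ~: (D :|: S), dom_wins k' (x |: D) S false]
    else [forall x in ~: (D :|: S), dom_wins k' D (x |: S) true]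
  else dominating D.

Fixpoint stal_wins (k : nat) (D S : {set T}) (dom_turn : bool) : bool :=
  if k is k'.+1 then
    if dom_turn then [forall x in ~: (D :|: S), stal_wins k' (x |: D) S false]
    else [exists x in ~: (D :|: S), stal_wins k' D (x |: S) true]
  else ~~ dominating D.

Definition D_wins_first : bool := dom_wins #|T| set0 set0 true.
Definition D_wins_second : bool := dom_wins #|T| set0 set0 false.
Definition S_wins_first : bool := stal_wins #|T| set0 set0 false.
Definition S_wins_second : bool := stal_wins #|T| set0 set0 true.

End Game.

Inductive outcome_t := OutD | OutS | OutN.

(* o(G): D if Dominator wins as first and as second player, S if Staller
   wins as first and as second player, N if the first player wins;
   None in any other (a priori possible) case. *)
Definition outcome (T : finType) (e : rel T) : option outcome_t :=
  if D_wins_first e && D_wins_second e then Some OutD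
  else if S_wins_first e && S_wins_second e then Some OutS
  else if D_wins_first e && S_wins_first e then Some OutN
  else None.

(* Glued graph G ⊙_{u,v} H: vertex set V(G) ⊎ (V(H) \ {v}); the vertex
   inl u plays the role of the identified vertex w. *)
Definition glue_vtx (T1 T2 : finType) (v : T2) : finType :=
  (T1 + {x : T2 | x != v})%type.
Arguments glue_vtx T1 {T2} v.

Definition glue_rel (T1 T2 : finType) (e1 : rel T1) (u : T1) (e2 : rel T2) (v : T2)
  : rel (glue_vtx T1 v) :=
  fun a b =>
    match a, b with
    | inl x, inl y => e1 x y
    | inr x, inr y => e2 (val x) (val y)
    | inl x, inr y => (x == u) && e2 v (val y)
    | inr x, inl y => (y == u) && e2 (val x) v
    end.

Arguments glue_rel {T1 T2} e1 u e2 v.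

(* Hanging split graph H_n: vertices None = v, Some (inl i) = v_(i+1),
   Some (inr i) = u_(i+1), for i < n-1. *)
Definition H_vtx (n : nat) : finType := option ('I_(n.-1) + 'I_(n.-1)).

Definition H_rel (n : nat) : rel (H_vtx n) :=
  fun a b =>
    match a, b with
    | None, Some (inl _) => true
    | Some (inl _), None => true
    | Some (inl i), Some (inl j) => i != j
    | Some (inl i), Some (inr j) => i == j
    | Some (inr i), Some (inl j) => i == j
    | _, _ => false
    end.

Definition H_v (n : nat) : H_vtx n := None.

Definition neutral (T2 : finType) (e2 : rel T2) (v : T2) : Prop :=
  forall (T : finType) (e : rel T), symmetric e -> irreflexive e ->
    forall u : T, outcome (glue_rel e u e2 v) = outcome e.

(* Main.v *)
Require Import Defs.
From mathcomp Require Import all_boot.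
From mathcomp Require Import zify.
Set Implicit Arguments. Unset Strict Implicit. Unset Printing Implicit Defensive.

Ltac bsolve := repeat (match goal with |- context[(?a \in ?B)] => case: (a \in B) end); rewrite //=.
Ltac bsolve_eq x y := case: (x =P y) => [->|_]; rewrite ?eqxx /=; bsolve.

Section Generic.
Variable T : finType.
Implicit Types (D S X Y K : {set T}) (win : {set T} -> bool).

Fixpoint dw win (k : nat) D S (t : bool) : bool :=
  if k is k'.+1 then
    if t then [exists x in ~: (D :|: S), dw win k' (x |: D) S false]
    else [forall x in ~: (D :|: S), dw win k' D (x |: S) true]
  else win D.

Definition fr D S := ~: (D :|: S).
Definition W win D S t := dw win #|fr D S| D S t.

Lemma in_fr x D S : (x \in fr D S) = (x \notin D) && (x \notin S).
Proof. by rewrite !inE negb_or. Qed.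

Lemma fr_addD y D S : y \in fr D S -> fr (y |: D) S = fr D S :\ y.
Proof. by move=> Hy; apply/setP => x; rewrite !inE; case: (x == y). Qed.
Lemma fr_addS y D S : y \in fr D S -> fr D (y |: S) = fr D S :\ y.
Proof. by move=> Hy; apply/setP => x; rewrite !inE; case: (x == y); rewrite ?orbT ?orbF. Qed.

Lemma card_addD y D S : y \in fr D S -> #|fr (y |: D) S| = #|fr D S|.-1.
Proof. by move=> Hy; rewrite fr_addD // (cardsD1 y (fr D S)) Hy. Qed.
Lemma card_addS y D S : y \in fr D S -> #|fr D (y |: S)| = #|fr D S|.-1.
Proof. by move=> Hy; rewrite fr_addS // (cardsD1 y (fr D S)) Hy. Qed.

Lemma W_term win D S t : fr D S = set0 -> W win D S t = win D.
Proof. by move=> H; rewrite /W H cards0; case: t. Qed.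

Lemma W_domE win D S : fr D S != set0 ->
  W win D S true = [exists y in fr D S, W win (y |: D) S false].
Proof.
move=> H; rewrite /W; have := H; rewrite -card_gt0.
case E: #|fr D S| => [//|k] _ /=.
apply/existsP/existsP => -[y /andP [Hy Hw]]; exists y; rewrite -/(fr D S) Hy /=;
  by rewrite card_addD // E in Hw *.
Qed.

Lemma W_stalE win D S : fr D S != set0 ->
  W win D S false = [forall y in fr D S, W win D (y |: S) true].
Proof.
move=> H; rewrite /W; have := H; rewrite -card_gt0.
case E: #|fr D S| => [//|k] _ /=.
apply/forallP/forallP => Hw y; apply/implyP => Hy; have := implyP (Hw y);
  rewrite -/(fr D S) Hy => /(_ isT); by rewrite card_addS // E.
Qed.

Lemma W_dom_move win D S y : y \in fr D S -> W win (y |: D) S false -> W win D S true.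
Proof.
move=> Hy Hw; have H : fr D S != set0 by apply/set0Pn; exists y.
by rewrite W_domE //; apply/existsP; exists y; rewrite Hy.
Qed.

Lemma W_dom_inv win D S : W win D S true -> fr D S != set0 ->
  exists2 y, y \in fr D S & W win (y |: D) S false.
Proof.
by move=> Hw H; rewrite W_domE // in Hw; case/existsP: Hw => y /andP [] *; exists y.
Qed.

Lemma W_stal_move win D S y : W win D S false -> y \in fr D S -> W win D (y |: S) true.
Proof.
move=> Hw Hy; have H : fr D S != set0 by apply/set0Pn; exists y.
by rewrite W_stalE // in Hw; move/forallP: Hw => /(_ y); rewrite Hy.
Qed.

Lemma W_stal_intro win D S : fr D S != set0 ->
  (forall y, y \in fr D S -> W win D (y |: S) true) -> W win D S false.
Proof.
move=> H Hw; rewrite W_stalE //; apply/forallP => y; apply/implyP; exact: Hw.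
Qed.

Definition monow win := forall X Y, X \subset Y -> win X -> win Y.

Lemma dw_cov win k D S t : monow win -> #|fr D S| = k -> dw win k D S t -> win (D :|: fr D S).
Proof.
move=> Hm; elim: k D S t => [|k IH] D S t Hk.
  have -> : fr D S = set0 by apply/eqP; rewrite -cards_eq0 Hk.
  by rewrite setU0; case: t.
case: t => /=.
  case/existsP => y /andP [Hy Hw].
  have := IH _ _ _ _ Hw; rewrite -/(fr D S) in Hy.
  rewrite card_addD // Hk => /(_ erefl); apply: Hm.
  apply/subsetP => x; rewrite fr_addD // !inE.
  move: Hy; rewrite in_fr.
  by bsolve_eq x y.
move=> Hw; have : fr D S != set0 by rewrite -card_gt0 Hk.
case/set0Pn => y Hy.
have := implyP (forallP Hw y); rewrite -/(fr D S) Hy => /(_ isT) Hw'.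
have := IH _ _ _ _ Hw'; rewrite card_addS // Hk => /(_ erefl); apply: Hm.
apply/subsetP => x; rewrite fr_addS // !inE; by bsolve_eq x y.
Qed.

Lemma W_cov win D S t : monow win -> W win D S t -> win (D :|: fr D S).
Proof. by move=> Hm; apply: dw_cov. Qed.

Section Mono.
Variables (win1 win2 : {set T} -> bool) (K : {set T}).
Hypothesis Hm : monow win1.
Hypothesis Hw : forall X Y, X \subset Y -> K \subset Y -> win1 X -> win2 Y.

Lemma mono_term t D S D' S' : fr D' S' = set0 -> K \subset D' -> D \subset D' -> S' \subset S ->
  W win1 D S t -> W win2 D' S' t.
Proof.
move=> Ht HK HD HS H; rewrite W_term //; apply: (Hw _ HK (W_cov Hm H)).
apply/subsetP => x; rewrite in_setU => /orP[/(subsetP HD)//|]; rewrite in_fr => /andP[_ HxS].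
have : x \notin fr D' S' by rewrite Ht inE.
rewrite in_fr negb_and !negbK => /orP[//|/(subsetP HS)]; by rewrite (negbTE HxS).
Qed.

Lemma W_mono_aux k t D S D' S' : #|fr D' S'| <= k -> K \subset D' -> D \subset D' -> S' \subset S ->
  W win1 D S t -> W win2 D' S' t.
Proof.
elim: k t D S D' S' => [|k IH] t D S D' S' Hk HK HD HS H.
  by apply: mono_term H => //; apply/eqP; rewrite -cards_eq0 -leqn0.
have [Ht|Hne] := eqVneq (fr D' S') set0; first exact: mono_term H.
case/set0Pn: (Hne) => z0 Hz0.
have HKz : forall z, K \subset z |: D'.
  by move=> z; apply: subset_trans HK _; apply/subsetP => x Hx; rewrite inE Hx orbT.
have HDz : forall z, D \subset z |: D'.
  by move=> z; apply: subset_trans HD _; apply/subsetP => x Hx; rewrite inE Hx orbT.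
have Hkz : forall z, z \in fr D' S' -> #|fr (z |: D') S'| <= k.
  by move=> z Hz; rewrite card_addD //; move: Hk; case: #|fr D' S'|.
case: t H => H.
  have [HP|HPne] := eqVneq (fr D S) set0.
    apply: (W_dom_move Hz0); apply: (IH false D S) => //; first exact: Hkz.
    by move: H; rewrite !W_term.
  case: (W_dom_inv H HPne) => y Hy Hy'.
  have [Hy2|Hy2] := boolP (y \in fr D' S').
    apply: (W_dom_move Hy2); apply: (IH false (y |: D) S) => //; first exact: Hkz.
    by apply/subsetP => x; rewrite !inE => /orP[->//|/(subsetP HD)->]; rewrite orbT.
  apply: (W_dom_move Hz0); apply: (IH false (y |: D) S) => //; first exact: Hkz.
  have HyD : y \in D'.
    move: Hy2 Hy; rewrite !in_fr negb_and !negbK => /orP[//|/(subsetP HS) ->].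
    by rewrite andbF.
  apply/subsetP => x; rewrite !inE => /orP[/eqP->|/(subsetP HD)->]; by rewrite ?HyD !orbT.
apply: W_stal_intro => // y Hy.
have [HyP|HyP] := boolP (y \in fr D S).
  apply: (IH true D (y |: S)) => //.
    by rewrite card_addS //; move: Hk; case: #|fr D' S'|.
    by apply/subsetP => x; rewrite !inE => /orP[->//|/(subsetP HS)->]; rewrite orbT.
  exact: W_stal_move.
have HyS : y \in S.
  move: HyP Hy; rewrite !in_fr negb_and !negbK => /orP[/(subsetP HD)->//|//].
have HS' : y |: S' \subset S.
  by apply/subsetP => x; rewrite !inE => /orP[/eqP->//|/(subsetP HS)].
have [Ht|Htne] := eqVneq (fr D' (y |: S')) set0; first by move: (mono_term Ht HK HD HS' H); rewrite !W_term.
case/set0Pn: Htne => z Hz.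
apply: (W_dom_move Hz); apply: (IH false D S) => //.
rewrite card_addD // card_addS //; move: Hk; case: #|fr D' S'| => //= m; case: m => //= m.
by rewrite ltnS => /ltnW.
Qed.

Lemma W_mono t D S D' S' : K \subset D' -> D \subset D' -> S' \subset S ->
  W win1 D S t -> W win2 D' S' t.
Proof. exact: W_mono_aux (leqnn _). Qed.
End Mono.
End Generic.


Lemma card_add2 (T : finType) (y z : T) D S : y \in fr D S -> z \in fr D S -> z != y ->
  #|fr (y |: D) (z |: S)| = #|fr D S|.-2.
Proof.
move=> Hy Hz Hzy; have Hz' : z \in fr (y |: D) S by rewrite fr_addD // in_setD1 Hzy.
by rewrite card_addS // card_addD.
Qed.

Lemma W_ext (T : finType) (w1 w2 : {set T} -> bool) D S t :
  (forall X, w1 X = w2 X) -> W w1 D S t = W w2 D S t.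
Proof.
move=> H; rewrite /W; move: #|fr D S| => k.
elim: k D S t => [|k IH] D S t /=; first by case: t.
by case: t; [apply: eq_existsb => x; rewrite IH | apply: eq_forallb => x; rewrite IH].
Qed.

Section Dom.
Variables (T : finType) (e : rel T).

Lemma dom_mono : monow (dominating e).
Proof.
move=> X Y /subsetP HXY /forallP H; apply/forallP => x; case/orP: (H x) => [/HXY -> //|].
case/existsP => y /andP [Hy Hxy]; apply/orP; right; apply/existsP; exists y; rewrite Hxy andbT; exact: HXY.
Qed.

Lemma dom_wins_dw k D S t : dom_wins e k D S t = dw (dominating e) k D S t.
Proof.
elim: k D S t => [|k IH] D S t //=.
by case: t; [apply: eq_existsb => x; rewrite IH | apply: eq_forallb => x; rewrite IH].
Qed.

Lemma stal_wins_neg k D S t : stal_wins e k D S t = ~~ dom_wins e k D S t.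
Proof.
elim: k D S t => [|k IH] D S t //=.
case: t.
  rewrite negb_exists; apply: eq_forallb => x; rewrite IH; by case: (x \in _).
rewrite negb_forall; apply: eq_existsb => x; rewrite IH; by case: (x \in _).
Qed.

Lemma dom_wins_W t : dom_wins e #|T| set0 set0 t = W (dominating e) set0 set0 t.
Proof. by rewrite dom_wins_dw /W /fr setU0 setC0 cardsT. Qed.
End Dom.


Section Glue.
Variables (T : finType) (e : rel T) (u : T) (n : nat).
Local Notation m := n.-1.
Local Notation Hs := {x : H_vtx n | x != H_v n}.
Local Notation G := (glue_vtx T (H_v n)).
Local Notation ge := (glue_rel e u (@H_rel n) (H_v n)).
Implicit Types (Q R : {set 'I_m}) (b t : bool) (k : nat).

Definition vv (i : 'I_m) : Hs := exist _ (Some (inl i)) isT.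
Definition uu (i : 'I_m) : Hs := exist _ (Some (inr i)) isT.

Definition hp (A B : {set 'I_m}) (h : Hs) : bool :=
  match val h with Some (inl i) => i \in A | Some (inr i) => i \in B | None => false end.
Definition gs (X : {set T}) (A B : {set 'I_m}) : {set G} :=
  [set z : G | match z with inl x => x \in X | inr h => hp A B h end].

Lemma Hs_case (h : Hs) : (exists i, h = vv i) \/ (exists i, h = uu i).
Proof.
case: h => [[[i|i]|] Hh]; first (by left; exists i; apply/val_inj);
  first (by right; exists i; apply/val_inj); by [].
Qed.

Lemma eq_vv i j : (inr (vv i) == inr (vv j) :> G) = (i == j). Proof. by []. Qed.
Lemma eq_uu i j : (inr (uu i) == inr (uu j) :> G) = (i == j). Proof. by []. Qed.
Lemma eq_vu i j : (inr (vv i) == inr (uu j) :> G) = false. Proof. by []. Qed.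
Lemma eq_uv i j : (inr (uu i) == inr (vv j) :> G) = false. Proof. by []. Qed.

Lemma in_gs_l x X A B : (inl x \in gs X A B) = (x \in X). Proof. by rewrite inE. Qed.
Lemma in_gs_v i X A B : (inr (vv i) \in gs X A B) = (i \in A). Proof. by rewrite inE. Qed.
Lemma in_gs_u i X A B : (inr (uu i) \in gs X A B) = (i \in B). Proof. by rewrite inE. Qed.

Ltac hcase h := let i := fresh "i" in let E := fresh "E" in case: (Hs_case h) => -[i E]; subst h.

Lemma gs_addl x X A B : inl x |: gs X A B = gs (x |: X) A B.
Proof. by apply/setP => -[y|h]; rewrite !inE. Qed.
Lemma gs_addv i X A B : inr (vv i) |: gs X A B = gs X (i |: A) B.
Proof. apply/setP => -[y|h]; rewrite !inE //; hcase h; rewrite /hp /= ?inE ?eq_vv ?eq_uv //. Qed.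
Lemma gs_addu i X A B : inr (uu i) |: gs X A B = gs X A (i |: B).
Proof. apply/setP => -[y|h]; rewrite !inE //; hcase h; rewrite /hp /= ?inE ?eq_uu ?eq_vu //. Qed.

Lemma gs_sub (X X' : {set T}) (A B A' B' : {set 'I_m}) : X \subset X' -> A \subset A' -> B \subset B' -> gs X A B \subset gs X' A' B'.
Proof.
move=> /subsetP HX /subsetP HA /subsetP HB; apply/subsetP => -[y|h].
  by rewrite !in_gs_l; apply: HX.
by hcase h; rewrite ?in_gs_v ?in_gs_u; auto.
Qed.

Lemma gs0 : gs set0 set0 set0 = set0.
Proof. by apply/setP => -[y|h]; rewrite !inE //; hcase h; rewrite /hp /= ?inE. Qed.

Lemma fr_l x D A B S C E : (inl x \in fr (gs D A B) (gs S C E)) = (x \in fr D S).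
Proof. by rewrite !in_fr !in_gs_l. Qed.
Lemma fr_v i D A B S C E : (inr (vv i) \in fr (gs D A B) (gs S C E)) = (i \notin A) && (i \notin C).
Proof. by rewrite !in_fr !in_gs_v. Qed.
Lemma fr_u i D A B S C E : (inr (uu i) \in fr (gs D A B) (gs S C E)) = (i \notin B) && (i \notin E).
Proof. by rewrite !in_fr !in_gs_u. Qed.

Lemma ge_ll x y : ge (inl x) (inl y) = e x y. Proof. by []. Qed.
Lemma ge_lv x i : ge (inl x) (inr (vv i)) = (x == u). Proof. by rewrite /= andbT. Qed.
Lemma ge_lu x i : ge (inl x) (inr (uu i)) = false. Proof. by rewrite /= andbF. Qed.
Lemma ge_ul i x : ge (inr (uu i)) (inl x) = false. Proof. by rewrite /= andbF. Qed.
Lemma ge_uv i j : ge (inr (uu i)) (inr (vv j)) = (i == j). Proof. by []. Qed.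
Lemma ge_uu i j : ge (inr (uu i)) (inr (uu j)) = false. Proof. by []. Qed.
Lemma ge_vu i j : ge (inr (vv i)) (inr (uu j)) = (i == j). Proof. by []. Qed.

Lemma A_term D S P1 P2 : fr (gs D P1 P2) (gs S P2 P1) = set0 -> dominating e D ->
  dominating ge (gs D P1 P2).
Proof.
move=> Hf /forallP HD; apply/forallP => -[x|h].
  case/orP: (HD x) => [Hx|/existsP [y /andP [Hy Hxy]]]; first by rewrite in_gs_l Hx.
  by apply/orP; right; apply/existsP; exists (inl y); rewrite in_gs_l Hy ge_ll.
have Hi : forall i, (i \in P1) || (i \in P2).
  move=> i; have : inr (vv i) \notin fr (gs D P1 P2) (gs S P2 P1) by rewrite Hf inE.
  by rewrite fr_v negb_and !negbK.
hcase h.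
  case/orP: (Hi i) => Hi'; first by rewrite in_gs_v Hi'.
  by apply/orP; right; apply/existsP; exists (inr (uu i)); rewrite in_gs_u Hi' ge_vu eqxx.
case/orP: (Hi i) => Hi'; last by rewrite in_gs_u Hi'.
by apply/orP; right; apply/existsP; exists (inr (vv i)); rewrite in_gs_v Hi' ge_uv eqxx.
Qed.

Lemma A_term' D S P1 P2 t : fr (gs D P1 P2) (gs S P2 P1) = set0 ->
  W (dominating e) D S t -> W (dominating ge) (gs D P1 P2) (gs S P2 P1) t.
Proof.
move=> Hf H.
have HfG : fr D S = set0.
  by apply/setP => x; rewrite in_set0 -(fr_l x D P1 P2 S P2 P1) Hf in_set0.
rewrite W_term //; rewrite W_term // in H; exact: (A_term Hf H).
Qed.

Lemma plainw (T' : finType) (e' : rel T') :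
  forall X Y : {set T'}, X \subset Y -> set0 \subset Y -> dominating e' X -> dominating e' Y.
Proof. by move=> X Y HXY _; apply: dom_mono. Qed.

Lemma glue_A k D S P1 P2 t : #|fr (gs D P1 P2) (gs S P2 P1)| <= k ->
  W (dominating e) D S t -> W (dominating ge) (gs D P1 P2) (gs S P2 P1) t.
Proof.
elim: k D S P1 P2 t => [|k IH] D S P1 P2 t Hk H.
  by apply: A_term' H; apply/eqP; rewrite -cards_eq0 -leqn0.
have [Hf|Hne] := eqVneq (fr (gs D P1 P2) (gs S P2 P1)) set0; first exact: A_term' H.
case: t H => H.
  have [HG|HGne] := eqVneq (fr D S) set0.
    case/set0Pn: Hne => -[x|h] Hz; first by rewrite fr_l HG inE in Hz.
    have [i Hi] : exists i, (i \notin P1) && (i \notin P2).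
      by hcase h; exists i; rewrite ?fr_v ?fr_u in Hz; [done | by rewrite andbC].
    have Hv : inr (vv i) \in fr (gs D P1 P2) (gs S P2 P1) by rewrite fr_v.
    have Hu : inr (uu i) \in fr (gs D P1 P2) (gs S P2 P1) by rewrite fr_u andbC.
    apply: (W_dom_move Hv); rewrite gs_addv.
    have H1 := IH D S (i |: P1) P2 false.
    have H2 := W_mono (@dom_mono _ ge) (@plainw _ ge).
    apply: H2 (sub0set _) (subxx _) _ (H1 _ _).
    - by apply: gs_sub => //; apply/subsetP => j Hj; rewrite inE Hj orbT.
    - rewrite -gs_addv -gs_addu card_add2 //; lia.
    - by move: H; rewrite !W_term.
  case: (W_dom_inv H HGne) => y Hy Hy'.
  have Hy2 : inl y \in fr (gs D P1 P2) (gs S P2 P1) by rewrite fr_l.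
  apply: (W_dom_move Hy2); rewrite gs_addl; apply: IH => //.
  rewrite -gs_addl card_addD //; lia.
apply: W_stal_intro => // -[x|h] Hz.
  have Hz' := Hz; rewrite fr_l in Hz'.
  rewrite gs_addl; apply: IH; last exact: W_stal_move H Hz'.
  rewrite -gs_addl card_addS //; lia.
hcase h.
  rewrite fr_v in Hz; rewrite gs_addv.
  have Hu : inr (uu i) \in fr (gs D P1 P2) (gs S (i |: P2) P1).
    by rewrite fr_u andbC.
  apply: (W_dom_move Hu); rewrite gs_addu; apply: IH => //.
  rewrite -gs_addu -gs_addv card_add2 ?fr_u ?fr_v //; first lia.
  by move: Hz; case: (i \in P1); case: (i \in P2).
rewrite fr_u in Hz; rewrite gs_addu.
have Hv : inr (vv i) \in fr (gs D P1 P2) (gs S P2 (i |: P1)).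
  by rewrite fr_v andbC.
apply: (W_dom_move Hv); rewrite gs_addv; apply: IH => //.
rewrite -gs_addv -gs_addu card_add2 ?fr_u ?fr_v //; first lia.
by move: Hz; case: (i \in P1); case: (i \in P2).
Qed.

Definition winG (b : bool) (X : {set T}) :=
  [forall x, (b && (x == u)) || ((x \in X) || [exists y in X, e x y])].

Lemma winG_mono b : monow (winG b).
Proof.
move=> X Y /subsetP HXY /forallP H; apply/forallP => x; case/orP: (H x) => [->//|/orP[/HXY ->|]].
  by rewrite orbT.
case/existsP => y /andP [Hy Hxy]; rewrite orbC; apply/orP; left; apply/orP; right.
by apply/existsP; exists y; rewrite Hxy andbT; exact: HXY.
Qed.

Lemma EQ_dom D R b : (forall i, i \in R -> b) -> dominating ge (gs D R setT) -> winG b D.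
Proof.
move=> Hb /forallP H; apply/forallP => x.
case/orP: (H (inl x)) => [|/existsP [[y|h] /andP [Hy Hxy]]].
- by rewrite in_gs_l => ->; rewrite orbT.
- rewrite in_gs_l in Hy; apply/orP; right; apply/orP; right.
  by apply/existsP; exists y; rewrite Hy.
- move: Hy Hxy; hcase h; last by rewrite ge_lu.
  by rewrite in_gs_v ge_lv => Hi /eqP ->; rewrite eqxx (Hb _ Hi).
Qed.

Lemma EQ_term D S Q R b t : (forall i, (i \in Q) || (i \in R)) -> (forall i, i \in R -> b) ->
  fr D S = set0 -> W (dominating ge) (gs D R setT) (gs S Q set0) t -> W (winG b) D S t.
Proof.
move=> HQR Hb HG H.
have Hf : fr (gs D R setT) (gs S Q set0) = set0.
  apply/setP => -[x|h]; first by rewrite fr_l HG !in_set0.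
  hcase h; rewrite ?fr_v ?fr_u in_set0; last by rewrite inE.
  by move: (HQR i); case: (i \in Q); case: (i \in R).
rewrite W_term //; rewrite W_term // in H; exact: (EQ_dom Hb H).
Qed.

Lemma glue_EQ k D S Q R b t : (forall i, (i \in Q) || (i \in R)) -> (forall i, i \in R -> b) ->
  #|fr D S| <= k -> W (dominating ge) (gs D R setT) (gs S Q set0) t -> W (winG b) D S t.
Proof.
move=> HQR Hb; elim: k D S t => [|k IH] D S t Hk H.
  by apply: (EQ_term HQR Hb _ H); apply/eqP; rewrite -cards_eq0 -leqn0.
have [HG|HGne] := eqVneq (fr D S) set0; first exact: (EQ_term HQR Hb HG H).
case: t H => H.
  have Hne : fr (gs D R setT) (gs S Q set0) != set0.
    by case/set0Pn: HGne => x Hx; apply/set0Pn; exists (inl x); rewrite fr_l.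
  case: (W_dom_inv H Hne) => -[x|h] Hy Hw.
    rewrite fr_l in Hy; rewrite gs_addl in Hw; apply: (W_dom_move Hy); apply: IH Hw.
    rewrite card_addD //; lia.
  exfalso; move: Hy; hcase h; rewrite ?fr_v ?fr_u; last by rewrite inE.
  by move: (HQR i); case: (i \in Q); case: (i \in R).
apply: W_stal_intro => // x Hx; apply: IH.
  rewrite card_addS //; lia.
rewrite -gs_addl; apply: W_stal_move H _; by rewrite fr_l.
Qed.

Lemma forced (Dg Sg : {set G}) i : inr (vv i) \in Sg -> inr (vv i) \notin Dg ->
  inr (uu i) \in fr Dg Sg -> W (dominating ge) Dg Sg true ->
  W (dominating ge) (inr (uu i) |: Dg) Sg false.
Proof.
move=> HvS HvD Hu H.
have Hne : fr Dg Sg != set0 by apply/set0Pn; exists (inr (uu i)).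
case: (W_dom_inv H Hne) => y Hy Hw.
have [Eyu|Hyu] := eqVneq y (inr (uu i)); first by subst y.
exfalso.
have Hu' : inr (uu i) \in fr (y |: Dg) Sg by rewrite fr_addD // in_setD1 Hu eq_sym Hyu.
have := W_cov (@dom_mono _ ge) (W_stal_move Hw Hu').
have HuD : inr (uu i) \notin Dg by move: Hu; rewrite in_fr => /andP[].
have Hvy : (inr (vv i) == y) = false.
  by apply/eqP => E; move: Hy; rewrite -E in_fr HvS andbF.
move/forallP => /(_ (inr (uu i))) /orP [].
  have Huy : (inr (uu i) == y) = false by apply/negbTE; rewrite eq_sym.
  by rewrite in_setU in_fr !in_setU1 eqxx Huy (negbTE HuD) /=.
case/existsP => -[x|h] /andP [Hx]; first by rewrite ge_ul.
move: Hx; hcase h; last by rewrite ge_uu.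
rewrite ge_uv => Hx /eqP Eij; subst.
by move: Hx; rewrite in_setU in_fr !in_setU1 Hvy (negbTE HvD) eq_vu HvS /=.
Qed.

Lemma setC1_card (A : {set 'I_m}) i : i \notin A -> #|~: (i |: A)| = #|~: A|.-1.
Proof.
move=> Hi; have -> : ~: (i |: A) = ~: A :\ i by apply/setP => j; rewrite !inE negb_or.
by rewrite (cardsD1 i (~: A)) inE Hi.
Qed.

Lemma allcov Q R : ~: (Q :|: R) = set0 -> forall i, (i \in Q) || (i \in R).
Proof.
move=> H i; have : (i \in ~: (Q :|: R)) = false by rewrite H in_set0.
by rewrite in_setC in_setU => /negbFE.
Qed.

Lemma glue_B1 k D S Q R b : (forall i, i \in R -> b) -> #|~: (Q :|: R)| <= k ->
  W (dominating ge) (gs D R (Q :|: R)) (gs S Q set0) false -> W (winG b) D S false.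
Proof.
move=> Hb; elim: k Q => [|k IH] Q Hk H.
all: have [Hall|Hnall] := eqVneq (~: (Q :|: R)) set0.
1,3: have HQR := allcov Hall.
1,2: have E : Q :|: R = setT by apply/setP => i; rewrite in_setT in_setU HQR.
1,2: rewrite E in H; exact: (glue_EQ HQR Hb (leqnn _) H).
  by move: Hnall; rewrite -cards_eq0 -leqn0 Hk.
case/set0Pn: Hnall => i; rewrite in_setC in_setU negb_or => /andP [HiQ HiR].
have Hv : inr (vv i) \in fr (gs D R (Q :|: R)) (gs S Q set0) by rewrite fr_v HiR HiQ.
have H1 := W_stal_move H Hv; rewrite gs_addv in H1.
have C1 : inr (vv i) \in gs S (i |: Q) set0 by rewrite in_gs_v setU11.
have C2 : inr (vv i) \notin gs D R (Q :|: R) by rewrite in_gs_v HiR.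
have C3 : inr (uu i) \in fr (gs D R (Q :|: R)) (gs S (i |: Q) set0).
  by rewrite fr_u in_set0 in_setU (negbTE HiQ) (negbTE HiR).
have H2 := forced C1 C2 C3 H1; rewrite gs_addu setUA in H2.
apply: (IH (i |: Q)) H2.
have -> : (i |: Q) :|: R = i |: (Q :|: R) by rewrite setUA.
rewrite setC1_card ?in_setU ?negb_or ?HiQ ?HiR //; lia.
Qed.

Lemma glue_B2 k Q : #|~: Q| <= k ->
  W (dominating ge) (gs set0 set0 Q) (gs set0 Q set0) true -> W (dominating e) set0 set0 true.
Proof.
elim: k Q => [|k IH] Q Hk H.
all: have Hne : fr (gs set0 set0 Q) (gs set0 Q set0) != set0
  by apply/set0Pn; exists (inl u); rewrite fr_l in_fr !in_set0.
all: case: (W_dom_inv H Hne) => -[x|h] Hy Hw.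
1,3: rewrite gs_addl in Hw; rewrite fr_l in Hy; apply: (W_dom_move Hy);
  rewrite -(@W_ext _ (winG false)) //;
  apply: (@glue_B1 #|~: (Q :|: set0)| _ _ Q set0 false) => //.
1,3: by move=> ?; rewrite in_set0.
1,2: rewrite (setU0 Q); exact Hw.
all: move: Hy Hw; hcase h; rewrite ?fr_v ?fr_u ?in_set0 ?andbT => HiQ Hw.
2,4: rewrite gs_addu in Hw.
2: by move: Hk; rewrite leqn0 cards_eq0 => /eqP HQ; move: HiQ; rewrite -in_setC HQ in_set0.
2: have Hv : inr (vv i) \in fr (gs set0 set0 (i |: Q)) (gs set0 Q set0) by rewrite fr_v in_set0.
2: have := W_stal_move Hw Hv; rewrite gs_addv => Hw'.
2: by apply: (IH (i |: Q)) Hw'; rewrite setC1_card //; lia.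
all: rewrite gs_addv in Hw.
all: have Hw2 : W (dominating ge) (gs set0 (i |: set0) (Q :|: (i |: set0))) (gs set0 Q set0) false
  by apply: (W_mono (@dom_mono _ ge) (@plainw _ ge) (sub0set _) _ (subxx _) Hw);
     apply: gs_sub => //; apply/subsetP => j Hj; rewrite in_setU Hj.
all: have Hw3 : W (winG true) set0 set0 false
  by apply: (@glue_B1 #|~: (Q :|: (i |: set0))| _ _ Q (i |: set0) true) => //.
all: have Hw5 : forall X Y : {set T}, X \subset Y -> [set u] \subset Y -> winG true X -> dominating e Y
  by move=> X Y /subsetP HXY /subsetP HuY /forallP HX; apply/forallP => x;
     case/orP: (HX x) => [/eqP ->|]; [rewrite HuY ?inE // | case/orP => [/HXY ->//|];
     case/existsP => y /andP [Hy Hxy]; apply/orP; right; apply/existsP; exists y; rewrite Hxy HXY].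
all: have Hw4 : W (dominating e) (u |: set0) set0 false
  by apply: (W_mono (@winG_mono true) Hw5 _ (sub0set _) (subxx _) Hw3); rewrite setU0.
all: apply: (W_dom_move _ Hw4); by rewrite in_fr !in_set0.
Qed.

Lemma glue_eq t : W (dominating ge) set0 set0 t = W (dominating e) set0 set0 t.
Proof.
apply/idP/idP => H.
  case: t H => H.
    by apply: (@glue_B2 #|~: (set0 : {set 'I_m})| set0 (leqnn _)); rewrite gs0.
  rewrite -(@W_ext _ (winG false)) //.
  apply: (@glue_B1 #|~: (set0 :|: set0 : {set 'I_m})| _ _ set0 set0 false) => //.
  all: try by move=> ?; rewrite in_set0.
  by rewrite setU0 gs0.
rewrite -gs0; exact: (glue_A (leqnn _) H).
Qed.

End Glue.

Theorem proposition5 (n : nat) : 2 <= n -> neutral (@H_rel n) (H_v n).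
Proof.
move=> _ T e _ _ u.
rewrite /outcome /D_wins_first /D_wins_second /S_wins_first /S_wins_second.
by rewrite !stal_wins_neg !dom_wins_W !glue_eq.
Qed.
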